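(* Let $n \ge 3$ and let $\mathbf{Y}_1^A,\dots,\mathbf{Y}_{N_A}^A \in \mathbb{R}^n$ be the observed sample vectors of the $N_A$ variables (voxels) of a region $A$, none of them constant. For $i,i'\in\{1,\dots,N_A\}$ let $r^{A,A}_{i,i'} = \widehat{Cor}(\mathbf{Y}_i^A,\mathbf{Y}_{i'}^A)$ denote their sample Pearson correlation, and let $\mathbf{U}_1^A,\dots,\mathbf{U}_{N_A}^A$ be their U-scores. Apply agglomerative hierarchical clustering with Ward's linkage to the U-scores $\mathbf{U}_1^A,\dots,\mathbf{U}_{N_A}^A$, and cut the resulting dendrogram at a fixed height $h_A \ge 0$. Then for every cluster $\nu_A$ thus obtained (with $|\nu_A|$ its number of elements, and indices $i,i'$ ranging over the voxels in $\nu_A$), $$1 - \frac{h_A^2}{2} \;\le\; \frac{1}{|\nu_A|^2}\sum_{i,i' \in \nu_A} r^{A,A}_{i,i'} \;\le\; 1 .$$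
   Context: Sample correlation: for $\mathbf{a},\mathbf{b}\in\mathbb{R}^n$ with means $\bar a,\bar b$, let $\mathbf{a}^c=\mathbf{a}-\bar a\mathbf{1}_n$, $\mathbf{b}^c=\mathbf{b}-\bar b\mathbf{1}_n$; $\widehat{Cov}(\mathbf{a},\mathbf{b})=n^{-1}\langle\mathbf{a}^c,\mathbf{b}^c\rangle$, $\widehat{Var}(\mathbf{a})=n^{-1}\|\mathbf{a}^c\|^2$, $\widehat{Cor}(\mathbf{a},\mathbf{b})=\widehat{Cov}(\mathbf{a},\mathbf{b})/\sqrt{\widehat{Var}(\mathbf{a})\widehat{Var}(\mathbf{b})}$. U-scores: the U-score of $\mathbf{Y}_i^A$ is $\mathbf{U}_i^A=\mathbf{H}^T\mathbf{Z}_i^A\in\mathbb{R}^{n-1}$, where $\mathbf{Z}_i^A$ is the standardized (centered and normalized to unit Euclidean norm) version of $\mathbf{Y}_i^A$ and $\mathbf{H}$ is a fixed matrix with orthonormal columns spanning the orthogonal complement of $\mathbf{1}_n$ (obtained by Gram–Schmidt); U-scores lie on the unit sphere and satisfy $\widehat{Cor}(\mathbf{Y}_i,\mathbf{Y}_j)=\mathbf{U}_i^T\mathbf{U}_j = 1-\|\mathbf{U}_i-\mathbf{U}_j\|^2/2$. Ward's linkage: the distance between two clusters $\nu_1,\nu_2$ of U-scores is $D(\nu_1,\nu_2)=\sqrt{\frac{2|\nu_1||\nu_2|}{|\nu_1|+|\nu_2|}\,\|\overline{\mathbf{U}}^{\nu_1}-\overline{\mathbf{U}}^{\nu_2}\|^2}$,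 where $\overline{\mathbf{U}}^{\nu}$ is the centroid of cluster $\nu$; agglomerative clustering repeatedly merges the two clusters at smallest linkage distance, and cutting the dendrogram at height $h_A$ means retaining only merges performed at heights at most $h_A$, yielding the clusters. *)

(* Defs.v *)
From HB Require Import structures.
From mathcomp Require Import all_boot all_order all_algebra.
Set Implicit Arguments. Unset Strict Implicit. Unset Printing Implicit Defensive.
Import Order.TTheory GRing.Theory Num.Theory.
Local Open Scope ring_scope.

Section Defs.
Variable R : rcfType.

Section Stats.
Variable n : nat.

Definition ones : 'rV[R]_n := const_mx 1.
Definition dotv (a b : 'rV[R]_n) : R := \sum_(j < n) a 0 j * b 0 j.
Definition sample_mean (a : 'rV[R]_n) : R := (\sum_(j < n) a 0 j) / n%:R.
Definition centered (a : 'rV[R]_n) : 'rV[R]_n := a - sample_mean a *: ones.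
Definition sample_cov (a b : 'rV[R]_n) : R := dotv (centered a) (centered b) / n%:R.
Definition sample_var (a : 'rV[R]_n) : R := sample_cov a a.
Definition sample_cor (a b : 'rV[R]_n) : R :=
  sample_cov a b / Num.sqrt (sample_var a * sample_var b).
Definition standardized (a : 'rV[R]_n) : 'rV[R]_n :=
  (Num.sqrt (dotv (centered a) (centered a)))^-1 *: centered a.
Definition nonconstant (a : 'rV[R]_n) : Prop := exists j j' : 'I_n, a 0 j != a 0 j'.

Definition orth_complement_basis (H : 'M[R]_(n, n.-1)) : Prop :=
  H^T *m H = 1%:M /\ ones *m H = 0.
(* U-score (row-vector convention: U = Z H, i.e. the transpose of H^T Z) *)
Definition uscore (H : 'M[R]_(n, n.-1)) (a : 'rV[R]_n) : 'rV[R]_(n.-1) :=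
  standardized a *m H.
End Stats.

Section Ward.
Variables (m N : nat) (U : 'I_N -> 'rV[R]_m).

Definition sqnorm (v : 'rV[R]_m) : R := \sum_(j < m) v 0 j ^+ 2.
Definition centroid (nu : {set 'I_N}) : 'rV[R]_m :=
  (#|nu|%:R)^-1 *: \sum_(i in nu) U i.
Definition ward_dist (nu1 nu2 : {set 'I_N}) : R :=
  Num.sqrt ((2 * #|nu1|%:R * #|nu2|%:R) / (#|nu1|%:R + #|nu2|%:R)
            * sqnorm (centroid nu1 - centroid nu2)).

Definition ward_step (P Q : {set {set 'I_N}}) (A B : {set 'I_N}) : Prop :=
  [/\ A \in P, B \in P, A != B,
      (forall A' B', A' \in P -> B' \in P -> A' != B' ->
         ward_dist A B <= ward_dist A' B')
    & Q = (P :\: [set A; B]) :|: [set A :|: B]].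

(* a full run: start from singletons, perform the N-1 merges; the k-th merge
   joins A k and B k at height ward_dist (A k) (B k) *)
Definition ward_run (P : nat -> {set {set 'I_N}}) (A B : nat -> {set 'I_N}) : Prop :=
  P 0%N = [set [set i] | i : 'I_N] /\
  forall k, (k < N.-1)%N -> ward_step (P k) (P k.+1) (A k) (B k).

(* cutting the dendrogram at height h: keep only merges of height <= h;
   two points lie in the same cluster iff they are linked by kept merges *)
Definition kept_link (A B : nat -> {set 'I_N}) (h : R) : rel 'I_N :=
  fun a b => [exists k : 'I_N.-1,
    (ward_dist (A k) (B k) <= h) && (((a \in A k) && (b \in B k)) || ((b \in A k) && (a \in B k)))].
Definition cut_cluster (A B : nat -> {set 'I_N}) (h : R) (i : 'I_N) : {set 'I_N} :=
  [set j | connect (kept_link A B h) i j].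
End Ward.
End Defs.

(* Main.v *)
Require Import Defs.
From HB Require Import structures.
From mathcomp Require Import all_boot all_order all_algebra ring lra.
Set Implicit Arguments. Unset Strict Implicit. Unset Printing Implicit Defensive.
Import Order.TTheory GRing.Theory Num.Theory.
Local Open Scope ring_scope.

Section Lin.
Variables (R : rcfType) (n : nat).
Hypothesis n_gt0 : (0 < n)%N.

Lemma ones_ne0 : ones R n != 0.
Proof.
apply/eqP => /matrixP /(_ 0 (Ordinal n_gt0)); rewrite !mxE => /eqP; by rewrite oner_eq0.
Qed.

Lemma mx11_eq0 (M : 'M[R]_1) : M 0 0 = 0 -> M = 0.
Proof. by move=> h; apply/matrixP => i j; rewrite !ord1 h mxE. Qed.

Lemma ones_ones c : ((c *: ones R n) *m (ones R n)^T) 0 0 = c * n%:R.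
Proof.
rewrite mxE; under eq_bigr do rewrite !mxE.
by rewrite sumr_const card_ord !mulr1 mulr_natr.
Qed.

Lemma projH (H : 'M[R]_(n, n.-1)) (hH : orth_complement_basis H) (v : 'rV[R]_n) :
  v *m (ones R n)^T = 0 -> v *m H *m H^T = v.
Proof.
case: hH => hHH h1H hv.
have rH : \rank H = n.-1.
  apply/eqP; rewrite eqn_leq rank_leq_col /=.
  by rewrite -{1}(mxrank1 R n.-1) -hHH mxrankM_maxr.
have rk : \rank (kermx H) = 1%N by rewrite mxrank_ker rH -{1}(prednK n_gt0) subSnn.
have s1 : (ones R n <= kermx H)%MS by apply/sub_kermxP.
have s2 : (kermx H <= ones R n)%MS.
  by rewrite -(mxrank_leqif_sup s1).2 rank_rV ones_ne0 rk.
set w := v - v *m H *m H^T.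
have wH : w *m H = 0 by rewrite /w mulmxBl -!mulmxA hHH mulmx1 subrr.
have /sub_rVP [c wc] : (w <= ones R n)%MS.
  by apply: submx_trans s2; apply/sub_kermxP.
have w1 : w *m (ones R n)^T = 0.
  by rewrite /w mulmxBl hv -!mulmxA -trmx_mul h1H trmx0 !mulmx0 subrr.
have c0 : c = 0.
  have := ones_ones c; rewrite -wc w1 mxE => /esym /eqP.
  by rewrite mulf_eq0 pnatr_eq0 eqn0Ngt n_gt0 orbF => /eqP.
by apply/esym/eqP; rewrite -subr_eq0 -/w wc c0 scale0r.
Qed.

Lemma centered_ones (a : 'rV[R]_n) : centered a *m (ones R n)^T = 0.
Proof.
apply: mx11_eq0; rewrite !mxE.
under eq_bigr do rewrite !mxE !mulr1.
rewrite sumrB sumr_const card_ord /sample_mean -[_ *+ n]mulr_natr divfK ?subrr //.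
by rewrite pnatr_eq0 eqn0Ngt n_gt0.
Qed.

Lemma dotv_ge0 (a : 'rV[R]_n) : 0 <= dotv a a.
Proof. by apply: sumr_ge0 => j _; rewrite -expr2 sqr_ge0. Qed.

Lemma uscore_dot (H : 'M[R]_(n, n.-1)) (hH : orth_complement_basis H) (a b : 'rV[R]_n) :
  (uscore H a *m (uscore H b)^T) 0 0 = sample_cor a b.
Proof.
rewrite /uscore trmx_mul mulmxA projH //; last first.
  by rewrite /standardized -scalemxAl centered_ones scaler0.
rewrite /standardized linearZ /= -scalemxAl -scalemxAr !mxE.
rewrite /sample_cor /sample_var /sample_cov.
set x := dotv (centered a) (centered a).
set y := dotv (centered b) (centered b).
have -> : \sum_j centered a 0 j * (centered b)^T j 0 = dotv (centered a) (centered b).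
  by apply: eq_bigr => j _; rewrite [_^T _ _]mxE.
have nz : n%:R != 0 :> R by rewrite pnatr_eq0 eqn0Ngt n_gt0.
rewrite [x / _ * _](_ : _ = (x * y) * (n%:R^-1) ^+ 2); last first.
  by rewrite expr2 mulrACA.
rewrite sqrtrM ?mulr_ge0 ?dotv_ge0 // sqrtr_sqr ger0_norm ?invr_ge0 ?ler0n //.
rewrite sqrtrM ?dotv_ge0 //.
rewrite !invfM invrK.
set sx := (Num.sqrt x)^-1; set sy := (Num.sqrt y)^-1; set p := dotv _ _.
by rewrite [p / _]mulrC -!mulrA; clearbody sx sy p; field.
Qed.

Lemma nonconstant_cor (a : 'rV[R]_n) : nonconstant a -> sample_cor a a = 1.
Proof.
move=> [j [j' hjj']].
have x0 : dotv (centered a) (centered a) != 0.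
  apply/eqP => /eqP; rewrite psumr_eq0; last by move=> k _; rewrite -expr2 sqr_ge0.
  move=> /allP h.
  have e k : a 0 k = sample_mean a.
    have := h k (mem_index_enum k); rewrite -expr2 sqrf_eq0 !mxE mulr1 subr_eq0.
    by move/eqP.
  by move: hjj'; rewrite !e eqxx.
rewrite /sample_cor /sample_var /sample_cov.
have nz : n%:R != 0 :> R by rewrite pnatr_eq0 eqn0Ngt n_gt0.
set x := dotv _ _ in x0 *.
have xp : 0 < x by rewrite lt0r x0 dotv_ge0.
by rewrite -expr2 sqrtr_sqr gtr0_norm ?divr_gt0 ?ltr0n // divff // mulf_neq0 // invr_eq0 pnatr_eq0 eqn0Ngt n_gt0.
Qed.
End Lin.

Section Ward1.
Variables (R : rcfType) (m N : nat) (U : 'I_N -> 'rV[R]_m) (g : 'I_N -> 'I_N -> R).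
Hypothesis hg : forall i j, (U i *m (U j)^T) 0 0 = g i j.
Hypothesis hg1 : forall i, g i i = 1.

Definition bf (u v : 'rV[R]_m) : R := (u *m v^T) 0 0.
Lemma bfBl u v w : bf (u - v) w = bf u w - bf v w.
Proof. by rewrite /bf mulmxBl !mxE. Qed.
Lemma bfBr u v w : bf u (v - w) = bf u v - bf u w.
Proof. by rewrite /bf linearB /= mulmxBr !mxE. Qed.
Lemma bfZl k u v : bf (k *: u) v = k * bf u v.
Proof. by rewrite /bf -scalemxAl !mxE. Qed.
Lemma bfZr k u v : bf u (k *: v) = k * bf u v.
Proof. by rewrite /bf linearZ /= -scalemxAr !mxE. Qed.
Lemma bf_sym u v : bf u v = bf v u.
Proof. by rewrite /bf -[u *m v^T]trmxK trmx_mul trmxK !mxE. Qed.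
Lemma bf_suml (X : {set 'I_N}) w : bf (\sum_(i in X) U i) w = \sum_(i in X) bf (U i) w.
Proof. by rewrite /bf mulmx_suml summxE. Qed.
Lemma bf_sumr (X : {set 'I_N}) w : bf w (\sum_(i in X) U i) = \sum_(i in X) bf w (U i).
Proof. by rewrite bf_sym bf_suml; apply: eq_bigr => i _; rewrite bf_sym. Qed.
Lemma sqnormE (v : 'rV[R]_m) : sqnorm v = bf v v.
Proof. by rewrite /sqnorm /bf mxE; apply: eq_bigr => j _; rewrite mxE expr2. Qed.
Lemma sqnorm_ge0 (v : 'rV[R]_m) : 0 <= sqnorm v.
Proof. by apply: sumr_ge0 => j _; rewrite sqr_ge0. Qed.

Lemma g_sym i j : g i j = g j i.
Proof. by rewrite -!hg -/(bf _ _) bf_sym. Qed.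

Definition G (X Y : {set 'I_N}) : R := \sum_(i in X) \sum_(j in Y) g i j.
Lemma bf_sums (X Y : {set 'I_N}) : bf (\sum_(i in X) U i) (\sum_(j in Y) U j) = G X Y.
Proof. by rewrite bf_suml; apply: eq_bigr => i _; rewrite bf_sumr; apply: eq_bigr => j _; rewrite /bf hg. Qed.
Lemma G_sym (X Y : {set 'I_N}) : G X Y = G Y X.
Proof. by rewrite /G exchange_big; apply: eq_bigr => i _; apply: eq_bigr => j _; rewrite g_sym. Qed.

Definition cd (X : {set 'I_N}) : R := #|X|%:R.
Lemma cd_neq0 (X : {set 'I_N}) : X != set0 -> cd X != 0.
Proof. by rewrite /cd pnatr_eq0 cards_eq0. Qed.
Lemma cd_gt0 (X : {set 'I_N}) : X != set0 -> 0 < cd X.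
Proof. by rewrite /cd ltr0n card_gt0. Qed.

Definition D2 X Y := 2 * cd X * cd Y / (cd X + cd Y) *
  (G X X / cd X ^+ 2 - 2 * G X Y / (cd X * cd Y) + G Y Y / cd Y ^+ 2).

Lemma centroid_sq (X Y : {set 'I_N}) : X != set0 -> Y != set0 ->
  sqnorm (centroid U X - centroid U Y) =
  G X X / cd X ^+ 2 - 2 * G X Y / (cd X * cd Y) + G Y Y / cd Y ^+ 2.
Proof.
move=> hX hY; rewrite sqnormE /centroid bfBl !bfBr !bfZl !bfZr !bf_sums (G_sym Y X).
have := cd_neq0 hX; have := cd_neq0 hY; rewrite /cd => h1 h2.
by field; rewrite h1 h2.
Qed.

Lemma D2_ge0 (X Y : {set 'I_N}) : X != set0 -> Y != set0 -> 0 <= D2 X Y.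
Proof.
move=> hX hY; rewrite /D2 -centroid_sq //; apply: mulr_ge0 (sqnorm_ge0 _).
by rewrite /cd divr_ge0 // ?mulr_ge0 ?addr_ge0 ?ler0n.
Qed.

Lemma ward_distE (X Y : {set 'I_N}) : X != set0 -> Y != set0 -> ward_dist U X Y = Num.sqrt (D2 X Y).
Proof. by move=> hX hY; rewrite /ward_dist /D2 -centroid_sq. Qed.

Lemma ward_sym (X Y : {set 'I_N}) : ward_dist U X Y = ward_dist U Y X.
Proof.
rewrite /ward_dist (addrC #|Y|%:R) (mulrAC 2 #|Y|%:R) !sqnormE !bfBl !bfBr.
rewrite (bf_sym (centroid U Y) (centroid U X)); congr (Num.sqrt (_ * _)); ring.
Qed.

Definition disj (S T : {set 'I_N}) := forall x, x \in S -> x \in T -> False.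
Lemma disjE (S T : {set 'I_N}) : disj S T -> [disjoint S & T].
Proof.
move=> h; rewrite disjoint_subset; apply/subsetP => x xS; rewrite inE; apply/negP; exact: h x xS.
Qed.
Lemma sumU (F : 'I_N -> R) (S T : {set 'I_N}) : disj S T ->
  \sum_(i in S :|: T) F i = \sum_(i in S) F i + \sum_(i in T) F i.
Proof.
move=> /disjE h; rewrite -bigU //; apply: eq_bigl => i; by rewrite !inE.
Qed.
Lemma cardU (S T : {set 'I_N}) : disj S T -> #|S :|: T| = (#|S| + #|T|)%N.
Proof. by move=> /disjE h; apply/eqP; rewrite (leq_card_setU S T).2. Qed.
Lemma cdU (S T : {set 'I_N}) : disj S T -> cd (S :|: T) = cd S + cd T.
Proof. by move=> h; rewrite /cd cardU // natrD. Qed.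
Lemma GUl (S T C : {set 'I_N}) : disj S T -> G (S :|: T) C = G S C + G T C.
Proof. by move=> h; rewrite /G sumU. Qed.
Lemma GUr (S T C : {set 'I_N}) : disj S T -> G C (S :|: T) = G C S + G C T.
Proof. by move=> h; rewrite G_sym GUl // !(G_sym C). Qed.

Lemma LW (S T C : {set 'I_N}) : S != set0 -> T != set0 -> C != set0 -> disj S T -> disj S C -> disj T C ->
  (cd S + cd T + cd C) * D2 (S :|: T) C =
  (cd S + cd C) * D2 S C + (cd T + cd C) * D2 T C - cd C * D2 S T.
Proof.
move=> hS hT hC dST dSC dTC.
rewrite /D2 cdU // !GUl // !GUr // (G_sym T S).
have := cd_gt0 hS; have := cd_gt0 hT; have := cd_gt0 hC.
set a := cd S; set b := cd T; set c := cd C => c0 b0 a0.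
field.
by rewrite !lt0r_neq0 // ?addr_gt0.
Qed.

Definition W X := cd X - G X X / cd X.

Lemma W_merge (S T : {set 'I_N}) : S != set0 -> T != set0 -> disj S T ->
  W (S :|: T) = W S + W T + D2 S T / 2.
Proof.
move=> hS hT dST.
rewrite /W /D2 cdU // GUl // !GUr // (G_sym T S).
have := cd_gt0 hS; have := cd_gt0 hT.
set a := cd S; set b := cd T => b0 a0.
field.
by rewrite !lt0r_neq0 // ?addr_gt0.
Qed.

Lemma LWmono (S T C : {set 'I_N}) : S != set0 -> T != set0 -> C != set0 ->
  disj S T -> disj S C -> disj T C ->
  ward_dist U S T <= ward_dist U S C -> ward_dist U S T <= ward_dist U T C ->
  ward_dist U S T <= ward_dist U (S :|: T) C.
Proof.
move=> hS hT hC dST dSC dTC.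
have hST : S :|: T != set0.
  apply: contraNneq hS => /setP e; apply/eqP/setP => x; have := e x; rewrite !inE.
  by case: (x \in S).
rewrite !ward_distE // !ler_sqrt ?D2_ge0 // => h1 h2.
have := LW hS hT hC dST dSC dTC.
have := cd_gt0 hS; have := cd_gt0 hT; have := cd_gt0 hC.
move: (D2 S T) (D2 S C) (D2 T C) (D2 (S :|: T) C) h1 h2 => x y z w h1 h2.
move: (cd S) (cd T) (cd C) => a b c c0 b0 a0 e.
have s0 : 0 < a + b + c by rewrite !addr_gt0.
rewrite -(ler_pM2l s0) e.
nra.
Qed.

Variables (P : nat -> {set {set 'I_N}}) (Am Bm : nat -> {set 'I_N}) (h : R).
Hypothesis hrun : ward_run U P Am Bm.
Hypothesis h0 : 0 <= h.

Lemma stepP k : (k < N.-1)%N -> ward_step U (P k) (P k.+1) (Am k) (Bm k).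
Proof. exact: hrun.2. Qed.

Lemma memS k S : (k < N.-1)%N -> (S \in P k.+1) =
  ((S \in P k) && (S != Am k) && (S != Bm k)) || (S == Am k :|: Bm k).
Proof.
move=> hk; case: (stepP hk) => _ _ _ _ ->; rewrite !inE.
by case: (S \in P k); case: (S == Am k); case: (S == Bm k).
Qed.

Definition Inv k := [/\ (forall S T, S \in P k -> T \in P k -> S != T -> disj S T),
  (forall S, S \in P k -> S != set0) & (forall i, exists2 S, S \in P k & i \in S)].

Lemma inv0 : Inv 0.
Proof.
rewrite /Inv hrun.1; split.
- move=> S T /imsetP [i _ ->] /imsetP [j _ ->] ne x; rewrite !inE => /eqP -> /eqP e.
  by move: ne; rewrite e eqxx.
- move=> S /imsetP [i _ ->]; apply/set0Pn; exists i; by rewrite inE.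
- move=> i; exists [set i]; last by rewrite inE.
  by apply/imsetP; exists i.
Qed.

Lemma setU_neq0 (S T : {set 'I_N}) : S != set0 -> S :|: T != set0.
Proof. by case/set0Pn => x xS; apply/set0Pn; exists x; rewrite inE xS. Qed.

Lemma invS k : (k < N.-1)%N -> Inv k -> Inv k.+1.
Proof.
move=> hk [hd hn hc]; case: (stepP hk) => hA hB hAB _ _.
split.
- move=> S T; rewrite !memS //.
  case/orP => [/andP [/andP [SP SA] SB] | /eqP ->]; case/orP => [/andP [/andP [TP TA] TB] | /eqP ->].
  + exact: hd.
  + move=> _ x xS; rewrite inE => /orP [xA | xB].
      by apply: (hd _ _ SP hA SA) xS xA.
    by apply: (hd _ _ SP hB SB) xS xB.
  + move=> _ x; rewrite inE => /orP [xA | xB] xT.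
      by apply: (hd _ _ TP hA TA) xT xA.
    by apply: (hd _ _ TP hB TB) xT xB.
  + by rewrite eqxx.
- move=> S; rewrite memS // => /orP [/andP [/andP [SP _] _] | /eqP ->].
    exact: hn.
  exact: setU_neq0 (hn _ hA).
- move=> i; have [S SP iS] := hc i.
  have [eA | nA] := eqVneq S (Am k).
    exists (Am k :|: Bm k); first by rewrite memS // eqxx orbT.
    by rewrite inE -eA iS.
  have [eB | nB] := eqVneq S (Bm k).
    exists (Am k :|: Bm k); first by rewrite memS // eqxx orbT.
    by rewrite inE -eB iS orbT.
  by exists S => //; rewrite memS // SP nA nB.
Qed.

Lemma invk k : (k <= N.-1)%N -> Inv k.
Proof.
elim: k => [|k IH] hk; first exact: inv0.
by apply: invS => //; apply: IH; apply: ltnW.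
Qed.

Definition d k := ward_dist U (Am k) (Bm k).

Lemma stepAB k : (k < N.-1)%N ->
  [/\ Am k \in P k, Bm k \in P k, Am k != set0, Bm k != set0 & disj (Am k) (Bm k)].
Proof.
move=> hk; have [hd hn _] := invk (ltnW hk); case: (stepP hk) => hA hB hAB _ _.
by split => //; [exact: hn | exact: hn | exact: hd].
Qed.

Lemma mono k : (k.+1 < N.-1)%N -> d k <= d k.+1.
Proof.
move=> hk1; have hk : (k < N.-1)%N by apply: ltnW.
have [hd hn _] := invk (ltnW hk).
case: (stepP hk) => hA hB hAB hmin _.
case: (stepP hk1) => hA' hB' hAB' _ _.
have [_ _ nA nB dAB] := stepAB hk.
rewrite /d; move: hA' hB' hAB'; rewrite !memS //.
set A' := Am k.+1; set B' := Bm k.+1.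
case/orP => [/andP [/andP [AP AA] AB] | /eqP eA]; case/orP => [/andP [/andP [BP BA] BB] | /eqP eB].
- by move=> ne; apply: hmin.
- move=> _; rewrite eB [ward_dist U A' _]ward_sym; apply: LWmono => //.
  + exact: hn.
  + by apply: hd => //; rewrite eq_sym.
  + by apply: hd => //; rewrite eq_sym.
  + by apply: hmin => //; rewrite eq_sym.
  + by apply: hmin => //; rewrite eq_sym.
- move=> _; rewrite eA; apply: LWmono => //.
  + exact: hn.
  + by apply: hd => //; rewrite eq_sym.
  + by apply: hd => //; rewrite eq_sym.
  + by apply: hmin => //; rewrite eq_sym.
  + by apply: hmin => //; rewrite eq_sym.
- by rewrite eA eB eqxx.
Qed.

Lemma mono_le i j : (i <= j)%N -> (j < N.-1)%N -> d i <= d j.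
Proof.
move=> hij; elim: j hij => [|j IH] hij hj.
  by move: hij; rewrite leqn0 => /eqP ->.
move: hij; rewrite leq_eqVlt => /orP [/eqP -> // | hij].
apply: le_trans (mono hj); apply: IH => //; exact: ltnW.
Qed.


Definition K := find (fun k => h < d k) (iota 0 N.-1).

Lemma K_le : (K <= N.-1)%N.
Proof. by rewrite /K -{2}(size_iota 0 N.-1) find_size. Qed.

Lemma keptP k : (k < N.-1)%N -> (d k <= h) = (k < K)%N.
Proof.
move=> hk; case: (ltnP k K) => hkK.
  have := before_find 0%N hkK; rewrite nth_iota ?add0n //.
  by rewrite ltNge => /negbFE.
have hK : (K < N.-1)%N by apply: leq_trans hk.
have hh : has (fun k => h < d k) (iota 0 N.-1) by rewrite has_find size_iota.
have := nth_find 0%N hh; rewrite -/K nth_iota // add0n => hd.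
apply/negbTE; rewrite -ltNge; exact: lt_le_trans hd (mono_le hkK hk).
Qed.

Lemma good k : (k <= K)%N -> forall S, S \in P k -> 0 <= W S <= (cd S - 1) * h ^+ 2 / 2.
Proof.
elim: k => [|k IH] hk S.
  rewrite hrun.1 => /imsetP [i _ ->].
  by rewrite /W /G /cd cards1 !big_set1 hg1 divr1 subrr !mul0r lexx.
have hkM : (k < N.-1)%N by apply: leq_trans hk K_le.
rewrite memS // => /orP [/andP [/andP [SP _] _] | /eqP ->].
  by apply: IH => //; exact: ltnW.
have [hA hB nA nB dAB] := stepAB hkM.
have /andP [wA0 wA1] := IH (ltnW hk) _ hA.
have /andP [wB0 wB1] := IH (ltnW hk) _ hB.
have dk : d k <= h by rewrite keptP.
have D0 : 0 <= d k by rewrite /d /ward_dist sqrtr_ge0.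
have e2 : D2 (Am k) (Bm k) = d k ^+ 2 by rewrite /d ward_distE // sqr_sqrtr // D2_ge0.
rewrite W_merge // e2 cdU //.
move: (W (Am k)) (W (Bm k)) (cd (Am k)) (cd (Bm k)) (d k) wA0 wA1 wB0 wB1 dk D0 => x y a b t *.
apply/andP; split; nra.
Qed.

Lemma refine k k' S : (k <= k')%N -> (k' <= N.-1)%N -> S \in P k ->
  exists2 T, T \in P k' & S \subset T.
Proof.
move=> hkk'; elim: k' hkk' => [|k' IH] hkk' hk' SP.
  by move: hkk'; rewrite leqn0 => /eqP e; subst k; exists S.
move: hkk'; rewrite leq_eqVlt => /orP [/eqP e | hkk']; first by subst k; exists S.
have [T TP ST] := IH hkk' (ltnW hk') SP.
have [eA | nA] := eqVneq T (Am k').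
  exists (Am k' :|: Bm k'); first by rewrite memS // eqxx orbT.
  by apply: subset_trans ST _; rewrite eA subsetUl.
have [eB | nB] := eqVneq T (Bm k').
  exists (Am k' :|: Bm k'); first by rewrite memS // eqxx orbT.
  by apply: subset_trans ST _; rewrite eB subsetUr.
by exists T => //; rewrite memS // TP nA nB.
Qed.

Notation e := (kept_link U Am Bm h).

Lemma conn k : (k <= K)%N -> forall S, S \in P k -> forall i j, i \in S -> j \in S -> connect e i j.
Proof.
elim: k => [|k IH] hk S.
  rewrite hrun.1 => /imsetP [x _ ->] i j; rewrite !inE => /eqP -> /eqP ->; exact: connect0.
have hkM : (k < N.-1)%N by apply: leq_trans hk K_le.
rewrite memS // => /orP [/andP [/andP [SP _] _] | /eqP ->].
  by apply: IH => //; exact: ltnW.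
have [hA hB _ _ _] := stepAB hkM.
have dk : d k <= h by rewrite keptP.
have lk a b : a \in Am k -> b \in Bm k -> e a b && e b a.
  move=> aA bB; apply/andP; split; apply/existsP; exists (Ordinal hkM); rewrite /= dk /=.
    by rewrite aA bB.
  by rewrite aA bB orbT.
move=> i j; rewrite !inE => /orP [iA | iB] /orP [jA | jB].
- exact: IH (ltnW hk) _ hA i j iA jA.
- by apply: connect1; case/andP: (lk _ _ iA jB).
- by apply: connect1; case/andP: (lk _ _ jA iB).
- exact: IH (ltnW hk) _ hB i j iB jB.
Qed.

Lemma link_same a b : e a b -> exists2 T, T \in P K & (a \in T) && (b \in T).
Proof.
case/existsP => k /andP [dk hab].
have hkM : (k < N.-1)%N := ltn_ord k.
have hkK : (k < K)%N by rewrite -keptP.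
have ABP : Am k :|: Bm k \in P k.+1 by rewrite memS // eqxx orbT.
have [T TP ST] := refine hkK K_le ABP.
exists T => //.
by case/orP: hab => /andP [x y]; rewrite !(subsetP ST) // inE ?x ?y ?orbT.
Qed.

Lemma cluster_block i0 : exists2 S, S \in P K & cut_cluster U Am Bm h i0 = S.
Proof.
have [hd hn hc] := invk K_le.
have [S SP iS] := hc i0.
exists S => //; apply/setP => j; rewrite inE; apply/idP/idP => [|jS]; last exact: conn (leqnn K) _ SP _ _ iS jS.
case/connectP => p; elim: p i0 iS => [|y p IHp] x xS /=; first by move=> _ ->.
case/andP => exy pp lj.
have [T TP /andP [xT yT]] := link_same exy.
have eST : S = T.
  apply/eqP; apply/negPn/negP => ne; exact: hd _ _ SP TP ne x xS xT.
by apply: IHp pp lj; rewrite eST.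
Qed.

End Ward1.

Theorem theorem1 (R : rcfType) (n NA : nat) (hn : (3 <= n)%N)
    (Y : 'I_NA -> 'rV[R]_n) (hY : forall i, nonconstant (Y i))
    (H : 'M[R]_(n, n.-1)) (hH : orth_complement_basis H)
    (P : nat -> {set {set 'I_NA}}) (A B : nat -> {set 'I_NA})
    (hrun : ward_run (fun i => uscore H (Y i)) P A B)
    (hA : R) (hA0 : 0 <= hA) (i0 : 'I_NA) :
  let nu := cut_cluster (fun i => uscore H (Y i)) A B hA i0 in
  1 - hA ^+ 2 / 2
    <= (#|nu|%:R ^+ 2)^-1 * \sum_(i in nu) \sum_(i' in nu) sample_cor (Y i) (Y i')
  /\ (#|nu|%:R ^+ 2)^-1 * \sum_(i in nu) \sum_(i' in nu) sample_cor (Y i) (Y i') <= 1.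
Proof.
move=> nu.
have n0 : (0 < n)%N by apply: leq_trans hn.
set U := fun i => uscore H (Y i).
set g := fun i j => sample_cor (Y i) (Y j).
have hg : forall i j, (U i *m (U j)^T) 0 0 = g i j.
  by move=> i j; rewrite /U /g uscore_dot.
have hg1 : forall i, g i i = 1 by move=> i; rewrite /g nonconstant_cor.
have [S SP eS] := cluster_block hg hA hrun i0.
have /andP [w0 w1] := good hg hg1 hrun (leqnn _) SP.
have [_ hnz _] := invk hrun (K_le U A B hA).
have s0 := cd_gt0 R (hnz _ SP).
rewrite /nu eS -/(G g S S) -/(cd R S).
move: w0 w1; rewrite /W.
move: (G g S S) (cd R S) s0 => x s s0 w0 w1.
have ex : s ^- 2 * x = 1 - (s - x / s) / s by field; rewrite lt0r_neq0.
rewrite ex; move: (s - x / s) w0 w1 => w w0 w1.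
have t0 : 0 <= hA ^+ 2 by rewrite sqr_ge0.
move: (hA ^+ 2) t0 w1 => t t0 w1.
have q0 : 0 <= w / s by rewrite divr_ge0 // ltW.
have q1 : w / s <= t / 2.
  rewrite ler_pdivrMr //; nra.
split; lra.
Qed.
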